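(* Let $\Gamma$ be a group that is nilpotent of class $\le n$, let $G:=\mathrm{Cay}(\Gamma,S)$ be a Cayley graph for a generating set $S$ containing two inequivalent elements, and let $r\ge 2^{n+1}$. Suppose that for all $g,h\in S$ with $g\not\equiv h$ there exists a morpheme of $\Gamma$ in $S$ of length at most $r$ that is magic in $g$ and $h$. Then $G$ has no $r$-local cutvertex.
   Context: A generating set excludes the neutral element $\mathbb{I}$ and is closed under inverses; $\mathrm{Cay}(\Gamma,S)$ is the simple graph on $\Gamma$ with edges $\{g,gs\}$. $a\equiv b$ means $a=b$ or $a=b^{-1}$. $\Gamma$ is nilpotent of class $\le n$ if $[g,h]_n=\mathbb{I}$ for all $g\not\equiv h$, where $[g,h]_1=gh^{-1}g^{-1}h$ and $[g,h]_n$ is the reduced form of $g[g,h]_{n-1}^{-1}g^{-1}[g,h]_{n-1}$. A morpheme of $\Gamma$ in $S$ is a nonempty word in $S$ evaluating to $\mathbb{I}$ none of whose nonempty proper contiguous subwords evaluates to $\mathbb{I}$. A word $u$ is magic in $g,h$ if $u$ and $u^{-1}$ together contain at least three of $gh,hg,g^{-1}h,hg^{-1}$ as contiguous subwords. The ball $B_r(v)$ is the subgraph of all vertices and edges on closed walks of length $\le r$ through $v$; $v$ is an $r$-local cutvertex if $B_r(v)-v$ is disconnected. *)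

(* Defs.v *)
From Stdlib Require Import List Arith Relations.
Import ListNotations.
Set Implicit Arguments.

Record Group := {
  carrier :> Type;
  gmul : carrier -> carrier -> carrier;
  ginv : carrier -> carrier;
  gone : carrier;
  gmulA : forall x y z, gmul x (gmul y z) = gmul (gmul x y) z;
  gmul1 : forall x, gmul gone x = x;
  gmulV : forall x, gmul (ginv x) x = gone
}.

Section Defs.
Variable Γ : Group.
Local Notation "x * y" := (gmul Γ x y).
Local Notation "x ^-1" := (ginv Γ x) (at level 3).
Local Notation "'I'" := (gone Γ).

Definition gequiv (a b : Γ) : Prop := a = b \/ a = b^-1.

(** [g,h]_1 = g h^-1 g^-1 h ; [g,h]_k = g [g,h]_{k-1}^-1 g^-1 [g,h]_{k-1}.
    With [g,h]_0 := h, both are the step x |-> g x^-1 g^-1 x. *)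
Fixpoint itcomm (k : nat) (g h : Γ) : Γ :=
  match k with
  | O => h
  | S k' => let c := itcomm k' g h in g * (c^-1 * (g^-1 * c))
  end.

(** nilpotent of class <= n (paper's definition, n >= 1) *)
Definition nilpotent_le (n : nat) : Prop :=
  forall g h : Γ, ~ gequiv g h -> itcomm n g h = I.

Definition weval (w : list Γ) : Γ := fold_right (fun a b => a * b) I w.

Definition generating_set (S : Γ -> Prop) : Prop :=
  ~ S I /\ (forall s, S s -> S s^-1) /\
  (forall g : Γ, exists w, Forall S w /\ weval w = g).

Definition subword (u w : list Γ) : Prop := exists a b, w = a ++ u ++ b.

Definition winv (w : list Γ) : list Γ := rev (map (ginv Γ) w).

Definition morpheme (S : Γ -> Prop) (w : list Γ) : Prop :=
  w <> [] /\ Forall S w /\ weval w = I /\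
  (forall a u b, w = a ++ u ++ b -> u <> [] -> (a <> [] \/ b <> []) ->
     weval u <> I).

Definition magic_word (g h : Γ) (i : nat) : list Γ :=
  match i with
  | 0 => [g; h]
  | 1 => [h; g]
  | 2 => [g^-1; h]
  | _ => [h; g^-1]
  end.

Definition magic (g h : Γ) (u : list Γ) : Prop :=
  exists i j k, i < j /\ j < k /\ k < 4 /\
    forall m, m = i \/ m = j \/ m = k ->
      subword (magic_word g h m) u \/ subword (magic_word g h m) (winv u).

Definition cay_adj (S : Γ -> Prop) (x y : Γ) : Prop := exists s, S s /\ y = x * s.
End Defs.

Section Graph.
Variable T : Type.
Variable E : T -> T -> Prop.

Fixpoint is_walk (x : T) (l : list T) : Prop :=
  match l with
  | [] => True
  | y :: l' => E x y /\ is_walk y l'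
  end.

Fixpoint walk_edge (x : T) (l : list T) (a b : T) : Prop :=
  match l with
  | [] => False
  | y :: l' => ((a = x /\ b = y) \/ (a = y /\ b = x)) \/ walk_edge y l' a b
  end.

Definition short_closed_walk (r : nat) (v x0 : T) (l : list T) : Prop :=
  is_walk x0 l /\ last l x0 = x0 /\ length l <= r /\ In v (x0 :: l).

Definition ballV (r : nat) (v x : T) : Prop :=
  exists x0 l, short_closed_walk r v x0 l /\ In x (x0 :: l).

Definition ballE (r : nat) (v a b : T) : Prop :=
  exists x0 l, short_closed_walk r v x0 l /\ walk_edge x0 l a b.

Definition ball_minus_E (r : nat) (v a b : T) : Prop :=
  ballE r v a b /\ a <> v /\ b <> v.

Definition local_cutvertex (r : nat) (v : T) : Prop :=
  exists x y, ballV r v x /\ x <> v /\ ballV r v y /\ y <> v /\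
    ~ clos_refl_trans T (ball_minus_E r v) x y.
End Graph.

(* Main.v *)
Require Import Defs.
From Stdlib Require Import List Arith Relations Lia Classical.
Import ListNotations.

Lemma g_mulVr (G : Group) (x : G) : gmul G x (ginv G x) = gone G.
Proof.
  rewrite <- (gmul1 G (gmul G x (ginv G x))).
  rewrite <- (gmulV G (ginv G x)) at 1.
  rewrite <- gmulA. rewrite (gmulA G (ginv G x) x (ginv G x)).
  rewrite gmulV, gmul1. apply gmulV.
Qed.

Lemma g_mul1r (G : Group) (x : G) : gmul G x (gone G) = x.
Proof.
  rewrite <- (gmulV G x), gmulA, g_mulVr. apply gmul1.
Qed.

Lemma g_cancel (G : Group) (z a b : G) : gmul G z a = gmul G z b -> a = b.
Proof.
  intro H. rewrite <- (gmul1 G a), <- (gmul1 G b), <- (gmulV G z), <- !gmulA, H.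
  reflexivity.
Qed.

Lemma g_inv_uniq (G : Group) (p q : G) : gmul G p q = gone G -> q = ginv G p.
Proof.
  intro H. rewrite <- (gmul1 G q), <- (gmulV G p), <- gmulA, H. apply g_mul1r.
Qed.

Lemma g_invK (G : Group) (x : G) : ginv G (ginv G x) = x.
Proof. symmetry. apply g_inv_uniq. apply gmulV. Qed.

Lemma g_rot (G : Group) (p q : G) : gmul G p q = gone G -> gmul G q p = gone G.
Proof. intro H. apply g_inv_uniq in H. subst. apply gmulV. Qed.

Lemma g_invM (G : Group) (x y : G) : ginv G (gmul G x y) = gmul G (ginv G y) (ginv G x).
Proof.
  symmetry. apply g_inv_uniq.
  rewrite <- gmulA, (gmulA G y), g_mulVr, gmul1. apply g_mulVr.
Qed.

Lemma g_inv1 (G : Group) : ginv G (gone G) = gone G.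
Proof. symmetry. apply g_inv_uniq. apply gmul1. Qed.

Lemma weval_app (G : Group) (p q : list G) :
  weval G (p ++ q) = gmul G (weval G p) (weval G q).
Proof.
  induction p; simpl. rewrite gmul1; auto. rewrite IHp, gmulA; auto.
Qed.

Lemma winv_app (G : Group) (p q : list G) : winv G (p ++ q) = winv G q ++ winv G p.
Proof. unfold winv. rewrite map_app, rev_app_distr. auto. Qed.

Lemma winvK (G : Group) (p : list G) : winv G (winv G p) = p.
Proof.
  unfold winv. rewrite map_rev, rev_involutive, map_map.
  induction p; simpl; auto. rewrite g_invK, IHp; auto.
Qed.

Lemma weval_winv (G : Group) (p : list G) : weval G (winv G p) = ginv G (weval G p).
Proof.
  induction p; simpl. rewrite g_inv1; auto.
  change (winv G (a :: p)) with (winv G ([a] ++ p)).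
  rewrite winv_app, weval_app, IHp, g_invM. simpl. rewrite g_mul1r. auto.
Qed.

Lemma winv_nil (G : Group) (p : list G) : winv G p = [] -> p = [].
Proof.
  unfold winv. intro H. destruct p; auto. simpl in H.
  destruct (rev (map (ginv G) p)); discriminate.
Qed.

Lemma winv_length (G : Group) (p : list G) : length (winv G p) = length p.
Proof. unfold winv. rewrite length_rev, length_map. auto. Qed.

Definition GW (G : Group) (S : G -> Prop) (r : nat) (u : list G) : Prop :=
  Forall S u /\ weval G u = gone G /\
  (forall a u' b, u = a ++ u' ++ b -> u' <> [] -> (a <> [] \/ b <> []) ->
     weval G u' <> gone G) /\ length u <= r.

Lemma GW_winv (G : Group) (S : G -> Prop) r u :
  (forall s, S s -> S (ginv G s)) -> GW G S r u -> GW G S r (winv G u).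
Proof.
  intros HS [H1 [H2 [H3 H4]]]. split; [|split; [|split]].
  - unfold winv. apply Forall_rev. apply Forall_map.
    eapply Forall_impl; [|exact H1]. auto.
  - rewrite weval_winv, H2. apply g_inv1.
  - intros a u' b E Hu Hab Hev.
    apply (H3 (winv G b) (winv G u') (winv G a)).
    + rewrite <- (winvK G u), E, !winv_app, app_assoc. auto.
    + intro C. apply Hu. apply winv_nil; auto.
    + destruct Hab as [Ha|Hb]; [right|left]; intro C; apply winv_nil in C; auto.
    + rewrite weval_winv, Hev. apply g_inv1.
  - rewrite winv_length; auto.
Qed.

Lemma morpheme_GW (G : Group) S r w :
  morpheme G S w -> length w <= r -> GW G S r w.
Proof. intros [_ [A [B C]]] D. repeat split; auto. Qed.

Fixpoint walkverts (G : Group) (z : G) (ws : list G) : list G :=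
  match ws with
  | [] => []
  | s :: ws' => gmul G z s :: walkverts G (gmul G z s) ws'
  end.

Lemma walkverts_walk (G : Group) S z ws :
  Forall S ws -> is_walk (cay_adj G S) z (walkverts G z ws).
Proof.
  revert z; induction ws; intros z H; simpl; auto.
  inversion H; subst. split; [exists a; auto | apply IHws; auto].
Qed.

Lemma last_cons_d T (x d : T) l : last (x :: l) d = last l x.
Proof. revert x d; induction l; intros x d; auto. change (last (a :: l) d = last (a :: l) x).
  rewrite !IHl. auto. Qed.

Lemma walkverts_last (G : Group) z ws : last (walkverts G z ws) z = gmul G z (weval G ws).
Proof.
  revert z; induction ws; intros z. simpl. rewrite g_mul1r; auto.
  cbn [walkverts weval fold_right]. rewrite last_cons_d, gmulA, <- IHws. auto.
Qed.

Lemma walkverts_length (G : Group) z ws : length (walkverts G z ws) = length ws.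
Proof. revert z; induction ws; simpl; auto. Qed.

Lemma walkverts_app (G : Group) z p q :
  walkverts G z (p ++ q) = walkverts G z p ++ walkverts G (gmul G z (weval G p)) q.
Proof.
  revert z; induction p; intros z; simpl. rewrite g_mul1r; auto.
  rewrite IHp, gmulA. auto.
Qed.

Lemma walkverts_in (G : Group) z ws q : In q (walkverts G z ws) ->
  exists p1 p2, ws = p1 ++ p2 /\ p1 <> [] /\ q = gmul G z (weval G p1).
Proof.
  revert z; induction ws; intros z H; simpl in H. contradiction.
  destruct H as [H|H].
  - exists [a], ws. simpl. rewrite g_mul1r. split; auto. split; auto. discriminate.
  - destruct (IHws _ H) as [p1 [p2 [E1 [E2 E3]]]].
    exists (a :: p1), p2. simpl. rewrite E1. split; auto. split. discriminate.
    rewrite E3, gmulA; auto.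
Qed.

Lemma walk_edge_app T z (l1 : list T) l2 a b :
  walk_edge z l1 a b -> walk_edge z (l1 ++ l2) a b.
Proof.
  revert z; induction l1; intros z H; simpl in *. contradiction.
  destruct H; auto.
Qed.

Lemma walk_edge_sym T z (l : list T) a b : walk_edge z l a b -> walk_edge z l b a.
Proof.
  revert z; induction l; intros z H; simpl in *. auto.
  destruct H as [[[-> ->]|[-> ->]]|H]; auto.
Qed.

Lemma walk_edge_adj T (E : T -> T -> Prop) z l a b :
  is_walk E z l -> walk_edge z l a b -> E a b \/ E b a.
Proof.
  revert z; induction l; intros z Hw H; simpl in *. contradiction.
  destruct Hw as [Hza Hw].
  destruct H as [[[-> ->]|[-> ->]]|H]; eauto.
Qed.

Lemma walk_conn T (R : T -> T -> Prop) (v : T) l z :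
  (forall a b, walk_edge z l a b -> a <> v -> b <> v -> R a b) ->
  z <> v -> (forall q, In q l -> q <> v) ->
  clos_refl_trans T R z (last l z).
Proof.
  revert z; induction l; intros z HE Hz Hl. apply rt_refl.
  rewrite last_cons_d.
  apply rt_trans with a.
  - apply rt_step. apply HE; [simpl; auto | exact Hz | apply Hl; simpl; auto].
  - apply IHl. intros. apply HE; simpl; auto. apply Hl; simpl; auto.
    intros q Hq; apply Hl; simpl; auto.
Qed.

Lemma ballE_sym T (E : T -> T -> Prop) r v a b : ball_minus_E E r v a b -> ball_minus_E E r v b a.
Proof.
  intros [[x0 [l [H1 H2]]] [H3 H4]]. split; auto.
  exists x0, l. split; auto. apply walk_edge_sym; auto.
Qed.

Lemma conn_sym T (R : T -> T -> Prop) (Hs : forall a b, R a b -> R b a) x y :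
  clos_refl_trans T R x y -> clos_refl_trans T R y x.
Proof.
  induction 1. apply rt_step; auto. apply rt_refl. eapply rt_trans; eauto.
Qed.

Lemma cycle_conn (G : Group) S r (v : G) u a b x y :
  GW G S r u -> u = a ++ x :: y :: b ->
  clos_refl_trans G (ball_minus_E (cay_adj G S) r v)
    (gmul G v y) (gmul G v (ginv G x)).
Proof.
  intros [HF [Hev [HNP Hlen]]] Eu. subst u.
  set (ws := y :: b ++ a).
  set (full := ws ++ [x]).
  assert (Hfull : weval G full = gone G).
  { unfold full, ws. rewrite weval_app in Hev. simpl in Hev.
    rewrite gmulA in Hev. apply g_rot in Hev.
    simpl. rewrite !weval_app. simpl. rewrite g_mul1r.
    rewrite <- Hev, !gmulA. auto. }
  assert (HFf : Forall S full).
  { unfold full, ws. apply Forall_app in HF. destruct HF as [HFa HFb].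
    inversion HFb; subst. inversion H2; subst.
    constructor; auto. apply Forall_app; split; auto.
    apply Forall_app; split; auto. }
  assert (Hws : weval G ws = ginv G x).
  { unfold full in Hfull. rewrite weval_app in Hfull.
    simpl in Hfull. rewrite g_mul1r in Hfull.
    apply g_rot, g_inv_uniq in Hfull. auto. }
  assert (Hnv : forall q, In q (walkverts G v ws) -> q <> v).
  { intros q Hq Eq. apply walkverts_in in Hq.
    destruct Hq as [p1 [p2 [E1 [E2 E3]]]]. subst q.
    assert (Hp1 : weval G p1 = gone G).
    { apply (g_cancel G v). rewrite g_mul1r. auto. }
    destruct p1 as [|y' p1']. contradiction.
    unfold ws in E1. simpl in E1. injection E1 as <- E1.
    apply app_eq_app in E1. destruct E1 as [l [[E4 E5]|[E4 E5]]].
    - subst b.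
      apply (HNP (a ++ [x]) (y :: p1') l).
      + rewrite <- !app_assoc. auto.
      + discriminate.
      + left. intro C. destruct a; discriminate.
      + auto.
    - subst p1' a.
      apply (HNP l (p2 ++ [x]) (y :: b)).
      + rewrite <- !app_assoc. auto.
      + intro C. destruct p2; discriminate.
      + right; discriminate.
      + assert (H : weval G ((y :: b ++ l) ++ p2 ++ [x]) = gone G).
        { rewrite <- Hfull. unfold full, ws. f_equal. simpl.
          rewrite <- !app_assoc. auto. }
        rewrite weval_app, Hp1, gmul1 in H. auto. }
  assert (Hball : short_closed_walk (cay_adj G S) r v v (walkverts G v full)).
  { split; [|split; [|split]].
    - apply walkverts_walk; auto.
    - rewrite walkverts_last, Hfull. apply g_mul1r.
    - rewrite walkverts_length. unfold full, ws. rewrite !length_app in *. simpl in *.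
      rewrite length_app in *. lia.
    - simpl; auto. }
  assert (Hwe : walkverts G v full =
      gmul G v y :: walkverts G (gmul G v y) (b ++ a) ++ walkverts G (gmul G v (weval G ws)) [x]).
  { unfold full. rewrite walkverts_app. auto. }
  assert (HL : last (walkverts G (gmul G v y) (b ++ a)) (gmul G v y) = gmul G v (ginv G x)).
  { rewrite walkverts_last, <- gmulA, <- Hws. auto. }
  rewrite <- HL. apply walk_conn with v.
  - intros a0 b0 He Ha Hb. split; auto. exists v, (walkverts G v full). split; auto.
    rewrite Hwe. simpl. right. apply walk_edge_app; auto.
  - apply Hnv. unfold ws. simpl. auto.
  - intros q Hq. apply Hnv. unfold ws. simpl. auto.
Qed.

Lemma good_fwd T (R : T -> T -> Prop) (Good : T -> Prop) (v : T) l :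
  forall x0,
  (forall a b, walk_edge x0 l a b -> a <> v -> b <> v -> R a b) ->
  (forall a b, walk_edge x0 l a b -> a = v -> b <> v -> Good b) ->
  (forall a b, R a b -> Good b -> Good a) ->
  (x0 = v \/ (x0 <> v /\ Good x0)) -> ~ In v l ->
  forall x, In x l -> Good x.
Proof.
  induction l as [|y l IH]; intros x0 HE Hv HG H0 Hn x Hx. contradiction.
  assert (Hyv : y <> v) by (intro C; apply Hn; left; auto).
  assert (Gy : Good y).
  { destruct H0 as [H0|[H0 G0]].
    - apply (Hv x0 y); simpl; auto.
    - apply (HG y x0); auto. apply HE; simpl; auto. }
  destruct Hx as [<-|Hx]; auto.
  apply (IH y); auto.
  - intros; apply HE; simpl; auto.
  - intros; apply (Hv a b); simpl; auto.
  - intro C; apply Hn; right; auto.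
Qed.

Lemma good_walk T (R : T -> T -> Prop) (Good : T -> Prop) (v : T) l :
  forall x0,
  (forall a b, walk_edge x0 l a b -> a <> v -> b <> v -> R a b) ->
  (forall a b, walk_edge x0 l a b -> a = v -> b <> v -> Good b) ->
  (forall a b, R a b -> Good b -> Good a) ->
  In v (x0 :: l) -> forall x, In x (x0 :: l) -> x <> v -> Good x.
Proof.
  induction l as [|y l IH]; intros x0 HE Hv HG Hin x Hx Hxv.
  - destruct Hin as [<-|[]]. destruct Hx as [<-|[]]. contradiction.
  - destruct (classic (In v (y :: l))) as [Hi|Hi].
    + assert (Hall : forall z, In z (y :: l) -> z <> v -> Good z).
      { apply IH; auto.
        - intros; apply HE; simpl; auto.
        - intros; apply (Hv a b); simpl; auto. }
      destruct Hx as [->|Hx]; auto.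
      destruct (classic (y = v)) as [Hy|Hy].
      * apply (Hv y x); simpl; auto.
      * apply (HG x y). apply HE; simpl; auto. apply Hall; simpl; auto.
    + destruct Hin as [Hin|Hin]; [|contradiction]. subst x0.
      destruct Hx as [Hx|Hx]. subst; contradiction.
      eapply good_fwd; eauto.
Qed.

Lemma subword_conn (G : Group) S r (v : G) u x y :
  GW G S r u -> subword G [x; y] u ->
  clos_refl_trans G (ball_minus_E (cay_adj G S) r v)
    (gmul G v y) (gmul G v (ginv G x)).
Proof.
  intros H [a [b E]]. simpl in E. eapply cycle_conn; eauto.
Qed.

Definition magic_fact (G : Group) S r (v g h : G) (m : nat) : Prop :=
  let c := clos_refl_trans G (ball_minus_E (cay_adj G S) r v) in
  match m with
  | 0 => c (gmul G v h) (gmul G v (ginv G g))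
  | 1 => c (gmul G v g) (gmul G v (ginv G h))
  | 2 => c (gmul G v h) (gmul G v g)
  | _ => c (gmul G v (ginv G g)) (gmul G v (ginv G h))
  end.

Lemma magic_fact_ok (G : Group) S r (v g h : G) u m :
  (forall s, S s -> S (ginv G s)) -> GW G S r u ->
  (subword G (magic_word G g h m) u \/ subword G (magic_word G g h m) (winv G u)) ->
  magic_fact G S r v g h m.
Proof.
  intros HS Hu Hsw.
  assert (Hu' : GW G S r (winv G u)) by (apply GW_winv; auto).
  assert (K : forall x y, subword G [x; y] u \/ subword G [x; y] (winv G u) ->
     clos_refl_trans G (ball_minus_E (cay_adj G S) r v)
       (gmul G v y) (gmul G v (ginv G x))).
  { intros x y [H|H]; [exact (subword_conn G S r v u x y Hu H) | exact (subword_conn G S r v _ x y Hu' H)]. }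
  destruct m as [|[|[|m]]]; simpl in *; auto.
  - pose proof (K _ _ Hsw) as K2. rewrite g_invK in K2. exact K2.
Qed.

Lemma pair_conn (G : Group) S r (v g h : G) :
  (forall s, S s -> S (ginv G s)) ->
  (exists w, morpheme G S w /\ length w <= r /\ magic G g h w) ->
  clos_refl_trans G (ball_minus_E (cay_adj G S) r v) (gmul G v g) (gmul G v h) /\
  clos_refl_trans G (ball_minus_E (cay_adj G S) r v) (gmul G v g) (gmul G v (ginv G g)).
Proof.
  intros HS [w [Hm [Hl [i [j [k [Hij [Hjk [Hk Hmag]]]]]]]]].
  assert (Hu := morpheme_GW G S r w Hm Hl).
  assert (F : forall m, m = i \/ m = j \/ m = k -> magic_fact G S r v g h m).
  { intros m Hm'. eapply magic_fact_ok; eauto. }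
  assert (Cs : forall a b, clos_refl_trans G (ball_minus_E (cay_adj G S) r v) a b ->
      clos_refl_trans G (ball_minus_E (cay_adj G S) r v) b a).
  { apply conn_sym. apply ballE_sym. }
  assert (Hc : (i = 0 /\ j = 1 /\ k = 2) \/ (i = 0 /\ j = 1 /\ k = 3) \/
               (i = 0 /\ j = 2 /\ k = 3) \/ (i = 1 /\ j = 2 /\ k = 3)) by lia.
  destruct Hc as [[-> [-> ->]]|[[-> [-> ->]]|[[-> [-> ->]]|[-> [-> ->]]]]];
  assert (e1 := F _ (or_introl eq_refl));
  assert (e2 := F _ (or_intror (or_introl eq_refl)));
  assert (e3 := F _ (or_intror (or_intror eq_refl)));
  simpl in e1, e2, e3; split; eauto 6 using rt_trans.
Qed.
Theorem lemma4p2 (Γ : Group) (S : Γ -> Prop) (n r : nat) :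
  1 <= n ->
  nilpotent_le Γ n ->
  generating_set Γ S ->
  (exists g h, S g /\ S h /\ ~ gequiv Γ g h) ->
  2 ^ (n + 1) <= r ->
  (forall g h, S g -> S h -> ~ gequiv Γ g h ->
     exists w, morpheme Γ S w /\ length w <= r /\ magic Γ g h w) ->
  forall v : Γ, ~ local_cutvertex (cay_adj Γ S) r v.
Proof.
  intros Hn Hnil [HI [HS Hgen]] [g0 [h0 [Hg0 [Hh0 Hgh0]]]] Hr Hmag v
    [x [y [Hx [Hxv [Hy [Hyv Hc]]]]]].
  apply Hc. clear Hc.
  set (R := ball_minus_E (cay_adj Γ S) r v).
  assert (Cs : forall a b, clos_refl_trans Γ R a b -> clos_refl_trans Γ R b a).
  { apply conn_sym. apply ballE_sym. }
  set (Good := fun z => exists s, S s /\ clos_refl_trans Γ R z (gmul Γ v s)).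
  assert (AG : forall z, ballV (cay_adj Γ S) r v z -> z <> v -> Good z).
  { intros z [x0 [l [Hsc Hin]]] Hzv.
    destruct Hsc as [Hw [Hlast [Hlen Hvin]]].
    eapply good_walk with (R := R) (Good := Good) (v := v); eauto.
    - intros a b He Ha Hb. split; auto. exists x0, l. split; auto. split; auto.
    - intros a b He Ha Hb. subst a.
      destruct (walk_edge_adj _ _ _ _ _ _ Hw He) as [[s [Hs E]]|[s [Hs E]]].
      + exists s. split; auto. rewrite E. apply rt_refl.
      + exists (ginv Γ s). split; auto.
        replace b with (gmul Γ v (ginv Γ s)) by
          (rewrite E, <- gmulA, g_mulVr, g_mul1r; auto).
        apply rt_refl.
    - intros a b Hab [s [Hs Hb]]. exists s. split; auto.
      apply rt_trans with b; auto. apply rt_step; auto. }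
  assert (Pair : forall g h, S g -> S h -> ~ gequiv Γ g h ->
     clos_refl_trans Γ R (gmul Γ v g) (gmul Γ v h) /\
     clos_refl_trans Γ R (gmul Γ v g) (gmul Γ v (ginv Γ g))).
  { intros g h Hg Hh Hgh. apply pair_conn; auto. }
  assert (Self : forall s, S s -> clos_refl_trans Γ R (gmul Γ v s) (gmul Γ v (ginv Γ s))).
  { intros s Hs. destruct (classic (gequiv Γ s g0)) as [E|E].
    - assert (~ gequiv Γ s h0).
      { intros E'. apply Hgh0. unfold gequiv in *.
        destruct E as [E|E]; destruct E' as [E'|E'].
        - left; congruence.
        - right; congruence.
        - right. rewrite <- (g_invK Γ g0), <- E, E'. auto.
        - left. rewrite <- (g_invK Γ g0), <- (g_invK Γ h0), <- E, <- E'. auto. }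
      apply (Pair s h0); auto.
    - apply (Pair s g0); auto. }
  assert (Nb : forall s t, S s -> S t -> clos_refl_trans Γ R (gmul Γ v s) (gmul Γ v t)).
  { intros s t Hs Ht. destruct (classic (gequiv Γ s t)) as [[E|E]|E].
    - subst; apply rt_refl.
    - subst s. apply Cs. apply Self; auto.
    - apply (Pair s t); auto. }
  destruct (AG x Hx Hxv) as [s [Hs Hxs]].
  destruct (AG y Hy Hyv) as [t [Ht Hyt]].
  apply rt_trans with (gmul Γ v s); auto.
  apply rt_trans with (gmul Γ v t); auto.
Qed.
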